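(* Let $K=\operatorname{cone}\{e_1,\dots,e_m\}\subset\mathbb{R}^m$ be a simplicial cone, and suppose there are pairwise distinct indices $i,j,k\in\{1,\dots,m\}$ with $\langle e_i,e_j\rangle<0$, $\langle e_i,e_k\rangle<0$ and $\langle e_j,e_k\rangle<0$. Then there is no proper cone $L$ such that $K$ is an $L$-isotone projection set.
   Context: $\mathbb{R}^m$ carries the standard inner product. A simplicial cone is $\operatorname{cone}\{e_1,\dots,e_m\}=\{\sum t^ie_i:t^i\ge0\}$ with $e_1,\dots,e_m$ linearly independent. A proper cone is a closed convex cone $L$ that is pointed and generating ($L-L=\mathbb{R}^m$). $x\le_L y$ means $y-x\in L$. $K$ is an $L$-isotone projection set if $x\le_L y$ implies $P_Kx\le_L P_Ky$, where $P_K$ is the metric projection onto $K$. *)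

(* Defs.v *)
From HB Require Import structures.
From mathcomp Require Import all_boot all_order all_algebra.
From mathcomp Require Import all_classical all_reals all_analysis.
Set Implicit Arguments. Unset Strict Implicit. Unset Printing Implicit Defensive.
Import Order.TTheory GRing.Theory Num.Theory.
Import numFieldNormedType.Exports.
Local Open Scope ring_scope.
Local Open Scope classical_set_scope.

Definition dotv (R : realType) (m : nat) (x y : 'rV[R]_m) : R :=
  \sum_(i < m) x 0 i * y 0 i.

Definition lin_indep (R : realType) (m : nat) (e : 'I_m -> 'rV[R]_m) : Prop :=
  forall t : 'I_m -> R, \sum_(i < m) t i *: e i = 0 -> forall i, t i = 0.

Definition cone_gen (R : realType) (m : nat) (e : 'I_m -> 'rV[R]_m) : set 'rV[R]_m :=
  [set x | exists t : 'I_m -> R, (forall i, 0 <= t i) /\ x = \sum_(i < m) t i *: e i].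

Definition proper_cone (R : realType) (m : nat) (L : set 'rV[R]_m) : Prop :=
  [/\ closed L,
      L 0,
      (forall x y a b, L x -> L y -> 0 <= a -> 0 <= b -> L (a *: x + b *: y)),
      (forall x, L x -> L (- x) -> x = 0) &
      (forall z, exists x y, [/\ L x, L y & z = x - y])].

Definition cone_le (R : realType) (m : nat) (L : set 'rV[R]_m) (x y : 'rV[R]_m) : Prop :=
  L (y - x).

Definition is_metric_proj (R : realType) (m : nat) (K : set 'rV[R]_m) (x p : 'rV[R]_m) : Prop :=
  K p /\ forall y, K y -> dotv (x - p) (x - p) <= dotv (x - y) (x - y).

Definition isotone_projection_set (R : realType) (m : nat) (L K : set 'rV[R]_m) : Prop :=
  forall x y p q, cone_le L x y -> is_metric_proj K x p -> is_metric_proj K y q ->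
    cone_le L p q.

(* Main.v *)
Require Import Defs.
From HB Require Import structures.
From mathcomp Require Import all_boot all_order all_algebra.
From mathcomp Require Import all_classical all_reals all_analysis.
From mathcomp Require Import ring lra.
Import Order.TTheory GRing.Theory Num.Theory.
Import numFieldNormedType.Exports.
Local Open Scope ring_scope.
Local Open Scope classical_set_scope.

Section Aux.
Variables (R : realType) (m : nat).
Implicit Types (x y z : 'rV[R]_m).

Lemma dotvC x y : dotv x y = dotv y x.
Proof. by rewrite /dotv; apply: eq_bigr => k _; rewrite mulrC. Qed.

Lemma dotvDl x y z : dotv (x + y) z = dotv x z + dotv y z.
Proof. by rewrite /dotv -big_split; apply: eq_bigr => k _; rewrite mxE mulrDl. Qed.

Lemma dotvZl (a : R) x y : dotv (a *: x) y = a * dotv x y.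
Proof. by rewrite /dotv mulr_sumr; apply: eq_bigr => k _; rewrite mxE mulrA. Qed.

Lemma dotvNl x y : dotv (- x) y = - dotv x y.
Proof. by rewrite /dotv -sumrN; apply: eq_bigr => k _; rewrite mxE mulNr. Qed.

Lemma dotv0l y : dotv 0 y = 0.
Proof. by rewrite /dotv big1 // => k _; rewrite mxE mul0r. Qed.

Lemma dotvBl x y z : dotv (x - y) z = dotv x z - dotv y z.
Proof. by rewrite dotvDl dotvNl. Qed.

Lemma dotvDr x y z : dotv z (x + y) = dotv z x + dotv z y.
Proof. by rewrite !(dotvC z) dotvDl. Qed.

Lemma dotvZr (a : R) x y : dotv y (a *: x) = a * dotv y x.
Proof. by rewrite !(dotvC y) dotvZl. Qed.

Lemma dotvBr x y z : dotv z (x - y) = dotv z x - dotv z y.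
Proof. by rewrite !(dotvC z) dotvBl. Qed.

Lemma dotv_ge0 x : 0 <= dotv x x.
Proof. by apply: sumr_ge0 => k _; rewrite -expr2 sqr_ge0. Qed.

Lemma dotv_suml (I : finType) (f : I -> 'rV[R]_m) y :
  dotv (\sum_(t : I) f t) y = \sum_(t : I) dotv (f t) y.
Proof.
apply: (big_ind2 (fun a b => dotv a y = b)); first exact: dotv0l.
  by move=> a b c d <- <-; rewrite dotvDl.
by [].
Qed.

Lemma dotv_gt0 x y : dotv x y < 0 -> 0 < dotv x x.
Proof.
move=> H; rewrite lt_neqAle dotv_ge0 andbT eq_sym; apply/negP => /eqP H0.
have x0 : x = 0.
  apply/rowP => k; rewrite mxE.
  have := psumr_eq0P (P := predT) (F := fun k => x 0 k * x 0 k).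
  move=> /(_ (fun k _ => ltac:(rewrite -expr2; exact: sqr_ge0)) H0 k isT).
  by move/eqP; rewrite mulf_eq0 orbb => /eqP.
by move: H; rewrite x0 dotv0l ltxx.
Qed.

Lemma cone_gen_ray (e : 'I_m -> 'rV[R]_m) i (a : R) : 0 <= a -> cone_gen e (a *: e i).
Proof.
move=> a0; exists (fun t => if t == i then a else 0); split.
  by move=> t; case: eqP.
rewrite (bigD1 i) //= eqxx big1 ?addr0 // => t /negbTE ->; exact: scale0r.
Qed.

Lemma proj_suff (e : 'I_m -> 'rV[R]_m) x p :
  cone_gen e p -> (forall t, dotv (x - p) (e t) <= 0) -> dotv (x - p) p = 0 ->
  is_metric_proj (cone_gen e) x p.
Proof.
move=> Kp Ht Hp; split => // y [s [s0 ->]].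
set Y := \sum_(i < m) s i *: e i.
have HY : dotv (x - p) Y <= 0.
  rewrite dotvC dotv_suml; apply: sumr_le0 => t _.
  by rewrite dotvZl dotvC; apply: mulr_ge0_le0.
have -> : x - Y = (x - p) + (p - Y) by rewrite addrA subrK.
have HpY : dotv (x - p) (p - Y) = - dotv (x - p) Y by rewrite dotvBr Hp sub0r.
have := dotv_ge0 (p - Y).
rewrite (dotvDl (x - p) (p - Y)) (dotvDr (x - p) (p - Y) (x - p)).
rewrite (dotvDr (x - p) (p - Y) (p - Y)) (dotvC (p - Y) (x - p)) HpY.
lra.
Qed.

Lemma dual_exists (e : 'I_m -> 'rV[R]_m) : lin_indep e ->
  forall b : 'rV[R]_m, exists n, forall t, dotv n (e t) = b 0 t.
Proof.
move=> li b.
pose E := \matrix_(t < m) e t.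
have rfE : row_free E.
  rewrite -kermx_eq0; apply/eqP/row_matrixP => r; rewrite row0.
  have : kermx E *m E = 0 by apply/eqP; rewrite -sub_kermx submx_refl.
  move=> /(congr1 (row r)); rewrite row_mul row0 mulmx_sum_row => H.
  apply/rowP => t; rewrite [RHS]mxE.
  apply: (li (fun t => row r (kermx E) 0 t)); rewrite -[RHS]H.
  by apply: eq_bigr => s _; rewrite rowK.
have uE : E^T \in unitmx by rewrite unitmx_tr -row_free_unit.
exists (b *m invmx E^T) => t.
have := mulmxKV uE b.
move=> /(congr1 (fun M : 'rV[R]_m => M 0 t)) /= <-.
rewrite [RHS]mxE; apply: eq_bigr => k _; rewrite !mxE.
done.
Qed.

End Aux.

Section Main.
Variables (R : realType) (m : nat) (e : 'I_m -> 'rV[R]_m) (L : set 'rV[R]_m).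
Hypothesis Lcone : forall x y a b, L x -> L y -> 0 <= a -> 0 <= b -> L (a *: x + b *: y).
Hypothesis L0 : L 0.

Lemma L_scale {a : R} {v} : 0 <= a -> L v -> L (a *: v).
Proof.
move=> a0 Lv; have := Lcone _ _ _ _ Lv L0 a0 (lexx 0).
by rewrite scaler0 addr0.
Qed.

Lemma L_pos {c : R} {v} : 0 < c -> L (c *: v) -> L v.
Proof.
move=> c0 H; have ic : 0 <= c^-1 by rewrite invr_ge0 ltW.
have := L_scale ic H.
by rewrite scalerA mulVf ?scale1r // gt_eqF.
Qed.

Lemma L_neg {c : R} {v} : c < 0 -> L (c *: v) -> L ((-1) *: v).
Proof.
move=> c0 H; have : 0 <= - c^-1 by rewrite oppr_ge0 ltW // invr_lt0.
move=> /(L_scale) /(_ H); rewrite scalerA mulNr mulVf ?lt_eqF //.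
Qed.

Hypothesis li : lin_indep e.
Hypothesis iso : isotone_projection_set L (cone_gen e).

Lemma inv_lemma i z : 0 < dotv (e i) (e i) -> L z ->
  L ((dotv z (e i) / dotv (e i) (e i)) *: e i).
Proof.
move=> pos Lz.
set c := dotv z (e i) / dotv (e i) (e i).
have [n Hn] := dual_exists _ _ _ li (\row_t (if t == i then 0 else -1 : R)).
pose w t := dotv (z - c *: e i) (e t).
have wi : w i = 0.
  by rewrite /w dotvBl dotvZl /c divfK ?subrr // lt0r_neq0.
pose M := \sum_t `|w t|.
have M0 : 0 <= M by apply: sumr_ge0 => t _; exact: normr_ge0.
have wM t : w t <= M.
  apply: (le_trans (ler_norm _)).
  rewrite /M (bigD1 t) //= lerDl; apply: sumr_ge0 => s _; exact: normr_ge0.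
pose x := `|c| *: e i + M *: n.
suff : cone_le L (`|c| *: e i) ((`|c| + c) *: e i).
  rewrite /cone_le; have -> // : (`|c| + c) *: e i - `|c| *: e i = c *: e i.
  by apply/rowP => k; rewrite !mxE; ring.
apply: (iso x (x + z)).
- by rewrite /cone_le addrAC subrr add0r.
- have Ex : x - `|c| *: e i = M *: n by rewrite /x addrAC subrr add0r.
  apply: proj_suff; rewrite ?Ex; first exact: cone_gen_ray.
    move=> t; rewrite dotvZl Hn mxE; case: eqP => _; first by rewrite mulr0.
    by rewrite mulrN1 oppr_le0.
  by rewrite dotvZr dotvZl Hn mxE eqxx !mulr0.
- have Ey : x + z - (`|c| + c) *: e i = M *: n + (z - c *: e i).
    by apply/rowP => k; rewrite /x !mxE; ring.
  have Ht t : dotv (M *: n + (z - c *: e i)) (e t) =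
      M * (if t == i then 0 else -1) + w t.
    by rewrite dotvDl dotvZl Hn mxE.
  apply: proj_suff; rewrite ?Ey.
  + apply: cone_gen_ray; have := ler_norm (- c); rewrite normrN; lra.
  + move=> t; rewrite Ht; case: eqP => [->|_]; first by rewrite wi mulr0 addr0.
    have := wM t; lra.
  + by rewrite dotvZr Ht eqxx wi mulr0 addr0 mulr0.
Qed.

Lemma sign_ex i : 0 < dotv (e i) (e i) ->
  (forall z, exists x y, [/\ L x, L y & z = x - y]) ->
  exists s : R, (s = 1 \/ s = -1) /\ L (s *: e i).
Proof.
move=> pos gen; have [x [y [Lx Ly Exy]]] := gen (e i).
have HD : dotv (e i) (e i) = dotv x (e i) - dotv y (e i).
  by rewrite {1}Exy dotvBl.
have Dn : dotv (e i) (e i) != 0 by rewrite lt0r_neq0.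
case: (ltrP 0 (dotv x (e i))) => hx.
  exists 1; split; first by left.
  rewrite scale1r; apply: (L_pos _ (inv_lemma i _ pos Lx)).
  by rewrite divr_gt0.
exists (-1); split; first by right.
apply: (L_neg _ (inv_lemma i _ pos Ly)).
rewrite pmulr_llt0 ?invr_gt0 //; lra.
Qed.

Lemma sign_pos i s z : (forall x, L x -> L (- x) -> x = 0) ->
  0 < dotv (e i) (e i) -> (s = 1 \/ s = -1) -> L (s *: e i) -> L z ->
  0 <= s * dotv z (e i).
Proof.
move=> pt pos hs Ls Lz; rewrite leNgt; apply/negP => neg.
have Hc := inv_lemma i _ pos Lz.
have ei0 : e i = 0.
  case: hs => hs; move: Ls neg; rewrite hs => Ls neg.
    rewrite scale1r in Ls; apply: pt => //.
    rewrite -scaleN1r; apply: (L_neg _ Hc).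
    rewrite pmulr_llt0 ?invr_gt0 //; lra.
  have Le : L (e i) by apply: (L_pos _ Hc); rewrite divr_gt0 //; lra.
  by apply: pt => //; rewrite -scaleN1r.
by move: pos; rewrite ei0 dotv0l ltxx.
Qed.

End Main.

Theorem corollary2 (R : realType) (m : nat) (e : 'I_m -> 'rV[R]_m)
  (i j k : 'I_m) :
  lin_indep e ->
  i != j -> i != k -> j != k ->
  dotv (e i) (e j) < 0 -> dotv (e i) (e k) < 0 -> dotv (e j) (e k) < 0 ->
  ~ exists L : set 'rV[R]_m,
      proper_cone L /\ isotone_projection_set L (cone_gen e).
Proof.
move=> li _ _ _ hij hik hjk [L [[_ L0 cvx pt gen] iso]].
have pi := dotv_gt0 _ _ _ _ hij.
have pk : 0 < dotv (e k) (e k) by apply: (dotv_gt0 _ _ _ (e i)); rewrite dotvC.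
have pj : 0 < dotv (e j) (e j) by exact: (dotv_gt0 _ _ _ _ hjk).
have [si [hsi Li]] := sign_ex _ _ _ _ cvx L0 li iso _ pi gen.
have [sj [hsj Lj]] := sign_ex _ _ _ _ cvx L0 li iso _ pj gen.
have [sk [hsk Lk]] := sign_ex _ _ _ _ cvx L0 li iso _ pk gen.
have h1 := sign_pos _ _ _ _ cvx L0 li iso _ _ _ pt pi hsi Li Lj.
have h2 := sign_pos _ _ _ _ cvx L0 li iso _ _ _ pt pi hsi Li Lk.
have h3 := sign_pos _ _ _ _ cvx L0 li iso _ _ _ pt pj hsj Lj Lk.
rewrite !dotvZl in h1 h2 h3.
rewrite (dotvC _ _ (e j) (e i)) in h1; rewrite (dotvC _ _ (e k) (e i)) in h2.
rewrite (dotvC _ _ (e k) (e j)) in h3.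
move: h1 h2 h3; case: hsi => ->; case: hsj => ->; case: hsk => ->;
  rewrite ?mul1r ?mulN1r ?opprK => h1 h2 h3; lra.
Qed.
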